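(* Let $\Gamma$ be a single-player extensive-form game with no chance nodes. For every leaf $z\in\mathcal Z$ there exists a behavioral strategy $\pi_z$ that reaches $z$ with probability $\alpha(z)$, and hence $U_1(\pi_z)\ge\alpha(z)u_1(z)$.
   Context: A single-player extensive-form game without chance nodes consists of a finite rooted tree (nodes $\mathcal H$, leaves $\mathcal Z$, actions $A_h$), all nonterminal nodes belonging to Player 1, a utility $u_1:\mathcal Z\to\mathbb R_{\ge0}$, and a partition $\mathcal I_1$ of the nonterminal nodes into infosets with common action sets $A_I$. A behavioral strategy $\pi$ assigns $\pi(\cdot\mid I)\in\Delta(A_I)$ to each $I$; the reach probability of $z$ is the product of $\pi(a_k\mid I_k)$ along its path; $U_1(\pi)=\sum_z\mathbb P(z\mid\pi)u_1(z)$. For $z\in\mathcal Z$ with root-to-$z$ path $(h_0,\dots,h_{d-1})$, let $I_k$ be the infoset of $h_k$ and $a_k$ the action taken at $h_k$. For $I\in\mathcal I_1$ and $a\in A_I$ let $n_z(I)=|\{k:I_k=I\}|$, $n_z(a)=|\{k:I_k=I,a_k=a\}|$, $p_z(a)=n_z(a)/n_z(I)$, and define the absentmindedness coefficient $\alpha(z)=\prod_{I\in\mathcal I_1:n_z(I)>1}\prod_{a\in A_I:n_z(a)>0}p_z(a)^{n_z(a)}\in(0,1]$. *)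

(* Defs.v *)
From mathcomp Require Import all_boot all_order all_algebra.
Set Implicit Arguments. Unset Strict Implicit. Unset Printing Implicit Defensive.
Import Order.TTheory GRing.Theory Num.Theory.
Local Open Scope ring_scope.

(* A single-player extensive-form game without chance nodes.
   - I : finite type of infoset labels (the infoset of a nonterminal node is
     its label, so the labels induce the partition of nonterminal nodes);
   - A i : the common (finite) action set of infoset i;
   - a nonterminal node labelled i has exactly one child per action of A i;
   - a leaf carries its utility u_1(z). *)
Section Game.
Variables (R : realFieldType) (I : finType) (A : I -> finType).

Inductive gtree : Type :=
| Leaf of R
| Node (i : I) of (A i -> gtree).

Definition step := {i : I & A i}.

Fixpoint leaves (t : gtree) : seq (seq step * R) :=
  match t with
  | Leaf u => [:: ([::], u)]
  | Node i f =>
      flatten [seq [seq (Tagged A a :: z.1, z.2) | z <- leaves (f a)]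
              | a <- enum (A i)]
  end.

Definition behavioral (pi : forall i : I, A i -> R) : Prop :=
  (forall i a, 0 <= pi i a) /\ (forall i, \sum_(a : A i) pi i a = 1).

Definition reach (pi : forall i : I, A i -> R) (z : seq step) : R :=
  \prod_(x <- z) pi (tag x) (tagged x).

Definition U1 (t : gtree) (pi : forall i : I, A i -> R) : R :=
  \sum_(z <- leaves t) reach pi z.1 * z.2.

Definition n_info (z : seq step) (i : I) : nat := count (fun x => tag x == i) z.
Definition n_act (z : seq step) (i : I) (a : A i) : nat :=
  count (pred1 (Tagged A a)) z.

Definition alpha (z : seq step) : R :=
  \prod_(i : I | (1 < n_info z i)%N)
    \prod_(a : A i | (0 < n_act z a)%N)
       ((n_act z a)%:R / (n_info z i)%:R) ^+ n_act z a.

End Game.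

(* Main.v *)
Require Import Defs.
From mathcomp Require Import all_boot all_order all_algebra.
Import Order.TTheory GRing.Theory Num.Theory.
Local Open Scope ring_scope.

Section H.
Variables (R : realFieldType) (I : finType) (A : I -> finType).

Lemma sum_pick (i : I) (x : step A) :
  (\sum_(a : A i) (x == Tagged A a))%N = (tag x == i).
Proof.
case: x => j b.
have [eij|nij] := eqVneq j i.
  subst j. transitivity (\sum_(a : A i) (b == a))%N.
    by apply: eq_bigr => a _; rewrite eq_Tagged.
  rewrite (bigD1 b) //= eqxx big1 //.
  by move=> a /negbTE; rewrite eq_sym => ->.
rewrite big1 /= ?(negbTE nij) //.
move=> a _; apply/eqP; rewrite eqb0; apply/negP => /eqP /(congr1 tag) /= e.
by rewrite e eqxx in nij.
Qed.

Lemma sum_n_act (z : seq (step A)) (i : I) :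
  (\sum_(a : A i) n_act z a)%N = n_info z i.
Proof.
elim: z => [|x z IH].
  by rewrite /n_info big1.
rewrite /n_info [count _ _]/= -/(n_info z i) -IH.
rewrite /n_act.
under eq_bigr => a _ do rewrite [count _ _]/=.
by rewrite big_split /= sum_pick.
Qed.

Lemma n_act_le (z : seq (step A)) (i : I) (a : A i) :
  (n_act z a <= n_info z i)%N.
Proof.
apply: sub_count => x /= /eqP ->. by [].
Qed.

Lemma prod_pick (pi : forall i : I, A i -> R) (x : step A) :
  \prod_(i : I) \prod_(a : A i) pi i a ^+ (Tagged A a == x) = pi (tag x) (tagged x).
Proof.
case: x => j b.
rewrite (bigD1 j) //= mulrC big1 ?mul1r.
  transitivity (\prod_(a : A j) pi j a ^+ (b == a)).
    by apply: eq_bigr => a _; rewrite eq_sym eq_Tagged.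
  rewrite (bigD1 b) //= eqxx expr1 big1 ?mulr1 //.
  by move=> a /negbTE; rewrite eq_sym => ->; rewrite expr0.
move=> i hij; apply: big1 => a _.
suff -> : (Tagged A a == Tagged A b) = false by rewrite expr0.
apply/negP => /eqP /(congr1 tag) /= e.
by rewrite e eqxx in hij.
Qed.

Lemma reach_count (pi : forall i : I, A i -> R) (z : seq (step A)) :
  reach pi z = \prod_(i : I) \prod_(a : A i) pi i a ^+ n_act z a.
Proof.
elim: z => [|x z IH].
  rewrite /reach big_nil; symmetry; apply: big1 => i _; apply: big1 => a _.
  by rewrite /n_act /= expr0.
rewrite /reach big_cons -/(reach pi z) IH -prod_pick -big_split /=.
apply: eq_bigr => i _; rewrite -big_split /=; apply: eq_bigr => a _.
by rewrite /n_act /= -exprD eq_sym.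
Qed.

Lemma sum_ge_mem (s : seq (seq (step A) * R)) (F : seq (step A) * R -> R) x :
  x \in s -> (forall y, y \in s -> 0 <= F y) -> F x <= \sum_(y <- s) F y.
Proof.
move=> xs hF.
rewrite (perm_big _ (perm_to_rem xs)) big_cons; apply: ler_wpDr (lexx _).
rewrite big_seq; apply: sumr_ge0 => y hy; apply: hF; exact: mem_rem hy.
Qed.

Lemma sum_unif (T : finType) : (0 < #|T|)%N -> \sum_(a : T) (#|T|%:R : R)^-1 = 1.
Proof.
move=> h; rewrite sumr_const; have -> : #|[pred x : T | true]| = #|T| by [].
by rewrite -(mulr_natr (#|T|%:R : R)^-1) mulVf // pnatr_eq0 -lt0n.
Qed.

End H.

Theorem lemma2 (R : realFieldType) (I : finType) (A : I -> finType)
  (t : gtree R A)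
  (hA : forall i : I, (0 < #|A i|)%N)
  (hu : forall z, z \in leaves t -> 0 <= z.2)
  (z : seq (step A) * R) (hz : z \in leaves t) :
  exists pi : forall i : I, A i -> R,
    behavioral pi /\ reach pi z.1 = alpha R z.1 /\ alpha R z.1 * z.2 <= U1 t pi.
Proof.
pose pi (i : I) (a : A i) : R := if (0 < n_info z.1 i)%N
  then (n_act z.1 a)%:R / (n_info z.1 i)%:R else (#|A i|%:R)^-1.
have hpi : behavioral pi.
  split.
    move=> i a; rewrite /pi; case: ifP => _.
      by rewrite divr_ge0 ?ler0n.
    by rewrite invr_ge0 ler0n.
  move=> i; rewrite /pi; case h: (0 < n_info z.1 i)%N.
    by rewrite -mulr_suml -natr_sum sum_n_act divff // pnatr_eq0 -lt0n.
  exact: sum_unif.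
have hr : reach pi z.1 = alpha R z.1.
  rewrite reach_count /alpha [RHS]big_mkcond; apply: eq_bigr => i _.
  have [h0|h0] := posnP (n_info z.1 i).
    rewrite h0 /=; apply: big1 => a _.
    have := @n_act_le _ _ z.1 i a; rewrite h0 leqn0 => /eqP ->; by rewrite expr0.
  have E : \prod_(a : A i) pi i a ^+ n_act z.1 a =
      \prod_(a : A i | (0 < n_act z.1 a)%N)
         ((n_act z.1 a)%:R / (n_info z.1 i)%:R) ^+ n_act z.1 a.
    rewrite [RHS]big_mkcond; apply: eq_bigr => a _; rewrite /pi h0.
    by have [->|hp] := posnP (n_act z.1 a); rewrite ?expr0 ?hp.
  rewrite E; case: ifP => // h1.
  have hi : n_info z.1 i = 1%N by apply/eqP; rewrite eqn_leq h0 leqNgt h1.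
  apply: big1 => a ha.
  have ha1 : n_act z.1 a = 1%N.
    by apply/eqP; rewrite eqn_leq ha andbT -hi n_act_le.
  by rewrite ha1 hi expr1 divr1.
exists pi; split => //; split => //.
rewrite -hr /U1.
apply: (@sum_ge_mem R I A _ (fun y => reach pi y.1 * y.2)) => // y hy.
apply: mulr_ge0; last exact: hu.
rewrite /reach; apply: prodr_ge0 => x _; exact: hpi.1.
Qed.
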